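(* Consider the Lorenz-Hamilton system on $\mathbb{R}^3$ $$\dot x_1=\tfrac12x_2,\qquad \dot x_2=-x_1x_3,\qquad \dot x_3=x_1x_2 ,$$ with equilibria $e_0=(0,0,0)$, $e_1^m=(m,0,0)$, $e_3^m=(0,0,m)$ for $m\in\mathbb{R}\setminus\{0\}$. Then: (i) $e_0$ and $e_1^m$ ($m\neq0$) are nonlinear stable; (ii) $e_3^m$ is nonlinear stable for $m>0$ and unstable for $m<0$.
   Context: Nonlinear stable means stable in the sense of Lyapunov: for every neighbourhood $U$ of the equilibrium there is a neighbourhood $V$ such that every trajectory starting in $V$ remains in $U$ for all $t\ge0$; unstable means not Lyapunov stable. *)

(* Defs.v *)
(* concrete reals R, with Coquelicot for derivatives and
   neighbourhoods (filter [locally] on the product uniform space R*R*R,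
   whose topology is the standard Euclidean topology of R^3). *)
From Stdlib Require Import Reals.
From Coquelicot Require Import Coquelicot.
Open Scope R_scope.

Definition state := ((R * R) * R)%type.
Definition c1 (p : state) : R := fst (fst p).
Definition c2 (p : state) : R := snd (fst p).
Definition c3 (p : state) : R := snd p.

Definition LH_trajectory (x : R -> state) : Prop :=
  forall t, 0 <= t ->
    is_derive (fun s => c1 (x s)) t (1/2 * c2 (x t)) /\
    is_derive (fun s => c2 (x s)) t (- (c1 (x t) * c3 (x t))) /\
    is_derive (fun s => c3 (x s)) t (c1 (x t) * c2 (x t)).

Definition LH_nonlinear_stable (e : state) : Prop :=
  forall U : state -> Prop, locally e U ->
    exists V : state -> Prop, locally e V /\
      forall x : R -> state, LH_trajectory x -> V (x 0) ->
        forall t, 0 <= t -> U (x t).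

Definition LH_unstable (e : state) : Prop := ~ LH_nonlinear_stable e.

(* Main.v *)
Require Import Defs.
From Stdlib Require Import Reals Lra Psatz.
From Coquelicot Require Import Coquelicot.
Require Import Defs.
Open Scope R_scope.

Lemma cpt_of_derive (f : R -> R) t l : is_derive f t l -> continuity_pt f t.
Proof. intro H. apply continuity_pt_filterlim. apply (ex_derive_continuous f t). exists l; exact H. Qed.

Lemma const_of_deriv0 (g : R -> R) :
  (forall s, 0 <= s -> is_derive g s 0) -> forall t, 0 <= t -> g t = g 0.
Proof.
  intros H t Ht.
  destruct (MVT_gen g 0 t (fun _ => 0)) as [c [_ Hc]].
  - intros y Hy. apply H. rewrite Rmin_left in Hy by lra. lra.
  - intros y Hy. apply cpt_of_derive with 0. apply H. rewrite Rmin_left in Hy by lra. lra.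
  - lra.
Qed.

Lemma LH_cons x : LH_trajectory x -> forall t, 0 <= t ->
  c2 (x t) * c2 (x t) + c3 (x t) * c3 (x t) = c2 (x 0) * c2 (x 0) + c3 (x 0) * c3 (x 0) /\
  c1 (x t) * c1 (x t) - c3 (x t) = c1 (x 0) * c1 (x 0) - c3 (x 0).
Proof.
  intros Hx t Ht. split.
  - apply (const_of_deriv0 (fun s => c2 (x s) * c2 (x s) + c3 (x s) * c3 (x s))); auto.
    intros s Hs. destruct (Hx s Hs) as [H1 [H2 H3]].
    pose proof (is_derive_plus _ _ _ _ _ (is_derive_mult _ _ _ _ _ H2 H2 Rmult_comm)
        (is_derive_mult _ _ _ _ _ H3 H3 Rmult_comm)) as D.
    simpl in D. unfold plus, mult in D; simpl in D.
    replace 0 with (- (c1 (x s) * c3 (x s)) * c2 (x s) + c2 (x s) * - (c1 (x s) * c3 (x s)) +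
      (c1 (x s) * c2 (x s) * c3 (x s) + c3 (x s) * (c1 (x s) * c2 (x s)))) by ring.
    exact D.
  - apply (const_of_deriv0 (fun s => c1 (x s) * c1 (x s) - c3 (x s))); auto.
    intros s Hs. destruct (Hx s Hs) as [H1 [H2 H3]].
    pose proof (is_derive_minus _ _ _ _ _ (is_derive_mult _ _ _ _ _ H1 H1 Rmult_comm) H3) as D.
    simpl in D. unfold minus, plus, opp, mult in D; simpl in D.
    replace 0 with (1/2 * c2 (x s) * c1 (x s) + c1 (x s) * (1/2 * c2 (x s)) + - (c1 (x s) * c2 (x s))) by field.
    exact D.
Qed.

Definition close (d : R) (p e : state) :=
  Rabs (c1 p - c1 e) < d /\ Rabs (c2 p - c2 e) < d /\ Rabs (c3 p - c3 e) < d.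

Lemma stab_crit e :
  (forall eps, 0 < eps -> exists d, 0 < d /\ forall x, LH_trajectory x -> close d (x 0) e ->
     forall t, 0 <= t -> close eps (x t) e) -> LH_nonlinear_stable e.
Proof.
  intros H U [eps HU].
  destruct (H eps (cond_pos eps)) as [d [Hd Hx]].
  exists (fun p => close d p e). split.
  - exists (mkposreal d Hd). intros [[p1 p2] p3] [[B1 B2] B3]. 
    destruct e as [[e1 e2] e3]. repeat split; assumption.
  - intros x Tx H0 t Ht. apply HU. destruct (Hx x Tx H0 t Ht) as [B1 [B2 B3]].
    destruct e as [[e1 e2] e3]. destruct (x t) as [[p1 p2] p3].
    repeat split; assumption.
Qed.
Lemma sq_lt u d : Rabs u < d -> u * u < d * d.
Proof. intro H. pose proof (Rabs_pos u). rewrite <- (Rabs_mult_sq u) at 1 || idtac.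
  destruct (Rcase_abs u); [rewrite Rabs_left in H by lra | rewrite Rabs_right in H by lra]; nra. Qed.
Lemma abs_of_sq u e : 0 < e -> u * u < e * e -> Rabs u < e.
Proof. intros He H. destruct (Rcase_abs u); [rewrite Rabs_left by lra | rewrite Rabs_right by lra]; nra. Qed.
Lemma sq_le_abs u e : 0 <= e -> u * u <= e * e -> Rabs u <= e.
Proof. intros He H. destruct (Rcase_abs u); [rewrite Rabs_left by lra | rewrite Rabs_right by lra]; nra. Qed.

Lemma stab_e0 : LH_nonlinear_stable ((0, 0), 0).
Proof.
  apply stab_crit. intros eps Heps.
  set (E := Rmin eps 1).
  assert (HE0 : 0 < E) by (unfold E; apply Rmin_glb_lt; lra).
  assert (HE1 : E <= eps) by apply Rmin_l.
  assert (HE2 : E <= 1) by apply Rmin_r.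
  exists (E * E / 8). split; [nra|].
  intros x Tx [B1 [B2 B3]] t Ht.
  destruct (LH_cons x Tx t Ht) as [P Q].
  unfold close, c1, c2, c3 in *; simpl in *.
  set (d := E * E / 8) in *.
  assert (Hd1 : 0 < d) by (unfold d; nra).
  assert (Hd2 : d <= E / 8) by (unfold d; nra).
  rewrite Rminus_0_r in *.
  set (a := fst (fst (x 0))) in *. set (b := snd (fst (x 0))) in *. set (c := snd (x 0)) in *.
  set (p := fst (fst (x t))) in *. set (q := snd (fst (x t))) in *. set (r := snd (x t)) in *.
  apply sq_lt in B1. apply sq_lt in B2. apply sq_lt in B3.
  assert (Hq : q * q < 4 * d * d) by nra.
  assert (Hr : r * r < 4 * d * d) by nra.
  assert (Hr' : Rabs r <= 2 * d) by (apply sq_le_abs; nra).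
  assert (Hc : Rabs c < d) by (apply abs_of_sq; nra).
  assert (Hr2 : r <= 2 * d) by (pose proof (Rle_abs r); lra).
  assert (Hc2 : - c <= d) by (pose proof (Rle_abs (-c)); rewrite Rabs_Ropp in *; lra).
  assert (Hdd : d * d <= d) by nra.
  assert (Hp : p * p < 4 * d) by lra.
  assert (HEE : E * E <= eps * eps) by nra.
  assert (H4 : 4 * d * d <= E * E) by nra.
  assert (H5 : 4 * d < E * E) by (unfold d; nra).
  repeat split; apply abs_of_sq; lra.
Qed.

Lemma stab_e3 m : 0 < m -> LH_nonlinear_stable ((0, 0), m).
Proof.
  intros Hm. apply stab_crit. intros eps Heps.
  set (d := Rmin (Rmin 1 (eps/4)) (Rmin (m/4) (eps*eps/(8*m+18)))).
  assert (Hd0 : 0 < d).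
  { unfold d. apply Rmin_glb_lt; apply Rmin_glb_lt; try lra.
    apply Rdiv_lt_0_compat; nra. }
  assert (Hd1 : d <= 1) by (unfold d; eapply Rle_trans; [apply Rmin_l|apply Rmin_l]).
  assert (Hd2 : d <= eps/4) by (unfold d; eapply Rle_trans; [apply Rmin_l|apply Rmin_r]).
  assert (Hd3 : d <= m/4) by (unfold d; eapply Rle_trans; [apply Rmin_r|apply Rmin_l]).
  assert (Hd4 : d <= eps*eps/(8*m+18)) by (unfold d; eapply Rle_trans; [apply Rmin_r|apply Rmin_r]).
  assert (Hd5 : d * (8*m+18) <= eps*eps).
  { apply Rmult_le_reg_r with (/ (8*m+18)). apply Rinv_0_lt_compat; lra.
    rewrite Rmult_assoc, Rinv_r by lra. lra. }
  clearbody d.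
  exists d. split; [lra|].
  intros x Tx [B1 [B2 B3]] t Ht.
  destruct (LH_cons x Tx t Ht) as [P Q].
  unfold close, c1, c2, c3 in *; simpl in *.
  rewrite !Rminus_0_r in *.
  set (a := fst (fst (x 0))) in *. set (b := snd (fst (x 0))) in *. set (c := snd (x 0)) in *.
  set (p := fst (fst (x t))) in *. set (q := snd (fst (x t))) in *. set (r := snd (x t)) in *.
  apply Rabs_def2 in B1, B2, B3.
  assert (Ha : a * a < d * d) by nra.
  assert (Hb : b * b < d * d) by nra.
  assert (Hdd : d * d <= d) by nra.
  assert (Hpp : 0 <= p * p) by nra.
  assert (Hrlo : r > m - 2 * d) by lra.
  assert (Hrhi : r < m + 2 * d).
  { destruct (Rlt_or_le r (m + 2 * d)) as [h|h]; [exact h|].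
    exfalso. assert (r * r >= (m + 2*d) * (m + 2*d)) by nra.
    assert (c * c < (m + d) * (m + d)) by nra. nra. }
  assert (Hp : p * p < 4 * d) by lra.
  assert (Hcr : (c - r) * (c + r) < 3 * d * (2 * m + 3)) by nra.
  assert (Hq : q * q < eps * eps) by nra.
  repeat split.
  - apply abs_of_sq; nra.
  - apply abs_of_sq; nra.
  - apply Rabs_def1; lra.
Qed.

Lemma stab_e1 m : m <> 0 -> LH_nonlinear_stable ((m, 0), 0).
Proof.
  intros Hm0. apply stab_crit. intros eps Heps.
  set (M := Rabs m).
  assert (HM : 0 < M) by (apply Rabs_pos_lt; exact Hm0).
  assert (HmM : m * m = M * M) by (unfold M; rewrite <- Rabs_mult, Rabs_right; nra).
  assert (Hms : (m > 0 /\ M = m) \/ (m < 0 /\ M = - m)).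
  { unfold M. destruct (Rcase_abs m); [right; rewrite Rabs_left | left; rewrite Rabs_right]; lra. }
  clearbody M.
  set (K := 2 * M + 4).
  assert (HK : 0 < K) by (unfold K; lra).
  set (d := Rmin (Rmin 1 (eps/4)) (Rmin (M*M/(2*K)) (eps*M/(2*K)))).
  assert (Hd0 : 0 < d).
  { unfold d. apply Rmin_glb_lt; apply Rmin_glb_lt; try lra;
    apply Rdiv_lt_0_compat; nra. }
  assert (Hd1 : d <= 1) by (unfold d; eapply Rle_trans; [apply Rmin_l|apply Rmin_l]).
  assert (Hd2 : d <= eps/4) by (unfold d; eapply Rle_trans; [apply Rmin_l|apply Rmin_r]).
  assert (Hd3 : d <= M*M/(2*K)) by (unfold d; eapply Rle_trans; [apply Rmin_r|apply Rmin_l]).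
  assert (Hd4 : d <= eps*M/(2*K)) by (unfold d; eapply Rle_trans; [apply Rmin_r|apply Rmin_r]).
  assert (Hd5 : d * K <= M*M/2).
  { apply Rmult_le_reg_r with (/ K). apply Rinv_0_lt_compat; lra.
    rewrite Rmult_assoc, Rinv_r by lra. replace (M * M / 2 * / K) with (M*M/(2*K)) by (field; lra). lra. }
  assert (Hd6 : d * K <= eps*M/2).
  { apply Rmult_le_reg_r with (/ K). apply Rinv_0_lt_compat; lra.
    rewrite Rmult_assoc, Rinv_r by lra. replace (eps * M / 2 * / K) with (eps*M/(2*K)) by (field; lra). lra. }
  assert (HdM : d < M / 4) by (unfold K in Hd5; nra).
  assert (HKe : K = 2*M+4) by reflexivity. clearbody d K. subst K.
  exists d. split; [lra|].
  intros x Tx B0.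
  assert (Bnd : forall s, 0 <= s -> Rabs (c2 (x s)) < 2 * d /\ Rabs (c3 (x s)) < 2 * d /\
      Rabs (c1 (x s) * c1 (x s) - m * m) < d * (2 * M + 4)).
  { intros s Hs. destruct B0 as [B1 [B2 B3]].
    destruct (LH_cons x Tx s Hs) as [P Q].
    unfold close, c1, c2, c3 in *; simpl in *.
    rewrite !Rminus_0_r in *.
    set (a := fst (fst (x 0))) in *. set (b := snd (fst (x 0))) in *. set (c := snd (x 0)) in *.
    set (p := fst (fst (x s))) in *. set (q := snd (fst (x s))) in *. set (r := snd (x s)) in *.
    apply Rabs_def2 in B1, B2, B3.
    assert (Hm2 : - M <= m <= M) by (destruct Hms as [[hm hM]|[hm hM]]; lra).
    assert (Hq : q * q < 4 * d * d) by nra.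
    assert (Hr : r * r < 4 * d * d) by nra.
    assert (Haa : Rabs (a * a - m * m) < d * (2 * M + 1)).
    { replace (a * a - m * m) with ((a - m) * (a + m)) by ring. rewrite Rabs_mult.
      assert (Rabs (a - m) < d) by (apply Rabs_def1; lra).
      assert (Rabs (a + m) <= 2 * M + 1) by (apply Rabs_le; lra).
      pose proof (Rabs_pos (a - m)). pose proof (Rabs_pos (a+m)). nra. }
    apply Rabs_def2 in Haa.
    split; [apply abs_of_sq; nra|]. split; [apply abs_of_sq; nra|].
    apply Rabs_def1.
    - assert (r < 2 * d) by nra. lra.
    - assert (r > - (2 * d)) by nra. lra. }
  intros t Ht.
  destruct (Bnd t Ht) as [Q2 [Q3 Q1]].
  assert (Sgn : m * c1 (x t) > 0).
  { destruct (Rlt_or_le 0 (m * c1 (x t))) as [h|h]; [exact h|exfalso].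
    assert (H0 : m * c1 (x 0) > 0).
    { destruct B0 as [B1 _]. unfold c1 in *; simpl in B1. apply Rabs_def2 in B1.
      destruct Hms as [[hm hM]|[hm hM]]; subst M; nra. }
    assert (Zero : exists z, 0 <= z <= t /\ c1 (x z) = 0).
    { destruct (Req_dec (m * c1 (x t)) 0) as [e|e].
      - exists t. split; [lra|]. apply Rmult_integral in e. destruct e; [contradiction|assumption].
      - destruct (Req_dec t 0) as [et|et]; [subst; lra|].
        destruct (Ranalysis5.IVT_interv (fun s => - m * c1 (x s)) 0 t) as [z [Hz Hz2]].
        + intros s Hs. apply cpt_of_derive with (- m * (1/2 * c2 (x s))).
          apply is_derive_scal. apply Tx. lra.
        + lra.
        + lra.
        + lra.
        + exists z. split; [exact Hz|]. apply Rmult_integral in Hz2.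
          destruct Hz2 as [e2|e2]; [exfalso; lra|exact e2]. }
    destruct Zero as [z [Hz Hz0]].
    destruct (Bnd z (proj1 Hz)) as [_ [_ Z1]]. rewrite Hz0 in Z1.
    apply Rabs_def2 in Z1. nra. }
  unfold close, c1, c2, c3 in *; simpl in *.
  rewrite !Rminus_0_r.
  set (p := fst (fst (x t))) in *.
  split; [|split; lra].
  apply Rabs_def2 in Q1.
  apply Rabs_def1.
  - destruct Hms as [[hm hM]|[hm hM]]; subst M; nra.
  - destruct Hms as [[hm hM]|[hm hM]]; subst M; nra.
Qed.

Definition hX1 s E := 2*s*E/(E^2+1).
Definition hX2 s E := 2*s^2*E*(E^2-1)/(E^2+1)^2.
Definition hX3 s E := 4*s^2*E^2/(E^2+1)^2 - s^2/2.
Definition htraj s t0 (t : R) : state :=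
  ((hX1 s (exp (s/2*(t0-t))), hX2 s (exp (s/2*(t0-t)))), hX3 s (exp (s/2*(t0-t)))).

Lemma htraj_ok s t0 : LH_trajectory (htraj s t0).
Proof.
  intros t _. unfold htraj, c1, c2, c3, hX1, hX2, hX3; simpl.
  assert (HE : 0 < exp (s/2*(t0-t))) by apply exp_pos.
  split; [|split]; auto_derive; try change (t0 + - t) with (t0 - t);
   set (E := exp (s/2*(t0-t))) in *; try (intro; nra); field; nra.
Qed.

Lemma div_lt a b d : 0 < b -> a < d * b -> a / b < d.
Proof. intros Hb H. unfold Rdiv. apply Rmult_lt_reg_r with b; [lra|].
  rewrite Rmult_assoc, Rinv_l by lra. lra. Qed.
Lemma div_gt a b d : 0 < b -> -(d * b) < a -> - d < a / b.
Proof. intros Hb H. unfold Rdiv. apply Rmult_lt_reg_r with b; [lra|].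
  rewrite Rmult_assoc, Rinv_l by lra. lra. Qed.

Lemma hbounds s L d : 0 < s -> 0 < d -> 1 <= L -> d * L > 2*s + 6*(s*s) ->
  Rabs (hX1 s L) < d /\ Rabs (hX2 s L) < d /\ Rabs (hX3 s L + s^2/2) < d.
Proof.
  intros Hs Hd HL H. unfold hX1, hX2, hX3.
  assert (HL2 : 0 < L^2 + 1) by nra.
  assert (HL4 : 0 < (L^2 + 1)^2) by nra.
  assert (Hss : 0 < s * s) by nra.
  assert (H4 : d * (L^2+1)^2 >= d * L * (L*L*L)) by (simpl; nra).
  assert (H5 : d * L * (L*L*L) >= (2*s + 6*(s*s)) * (L*L*L)) by nra.
  assert (HL3 : L*L*L >= L*L) by nra.
  assert (H6 : 4*(s*s)*(L*L) <= 6*(s*s)*(L*L*L)) by nra.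
  assert (HLp : 0 < L*L*L) by (apply Rmult_lt_0_compat; nra).
  assert (H8 : 0 < 2*s*(L*L*L)) by (apply Rmult_lt_0_compat; lra).
  assert (H7 : 6*(s*s)*(L*L*L) < (2*s + 6*(s*s))*(L*L*L)) by (ring_simplify; lra).
  repeat split; apply Rabs_def1.
  - apply div_lt; [lra|]. simpl. nra.
  - apply div_gt; [lra|]. nra.
  - apply div_lt; [lra|]. simpl in *. nra.
  - apply div_gt; [lra|]. simpl in *. nra.
  - replace (4 * s ^ 2 * L ^ 2 / (L ^ 2 + 1) ^ 2 - s ^ 2 / 2 + s ^ 2 / 2) with (4 * s ^ 2 * L ^ 2 / (L ^ 2 + 1) ^ 2) by ring.
    apply div_lt; [lra|]. simpl in *. nra.
  - replace (4 * s ^ 2 * L ^ 2 / (L ^ 2 + 1) ^ 2 - s ^ 2 / 2 + s ^ 2 / 2) with (4 * s ^ 2 * L ^ 2 / (L ^ 2 + 1) ^ 2) by ring.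
    apply div_gt; [lra|]. simpl in *. nra.
Qed.

Lemma unstab_e3 m : m < 0 -> LH_unstable ((0, 0), m).
Proof.
  intros Hm Hst.
  set (s := sqrt (-2 * m)).
  assert (Hs : 0 < s) by (apply sqrt_lt_R0; lra).
  assert (Hss : s * s = -2 * m) by (apply sqrt_sqrt; lra).
  destruct (Hst (fun p => Rabs (c1 p) < s)) as [V [[dl HV] Htr]].
  { exists (mkposreal s Hs). intros [[p1 p2] p3] [[B1 _] _]. unfold c1; simpl.
    change (Rabs (p1 - 0) < s) in B1. rewrite Rminus_0_r in B1. exact B1. }
  assert (Hdl : 0 < dl) by apply cond_pos.
  set (L := (2*s + 6*(s*s) + 1)/dl + 1).
  assert (HL0 : 0 < (2*s + 6*(s*s) + 1)/dl) by (apply Rdiv_lt_0_compat; nra).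
  assert (HL1 : 1 <= L) by (unfold L; lra).
  assert (HL2 : dl * L > 2*s + 6*(s*s)).
  { unfold L. rewrite Rmult_plus_distr_l. unfold Rdiv.
    replace (dl * ((2 * s + 6 * (s * s) + 1) * / dl)) with (2 * s + 6 * (s * s) + 1) by (field; lra).
    lra. }
  set (t0 := ln L / (s/2)).
  assert (HE0 : exp (s/2*(t0-0)) = L).
  { unfold t0. replace (s / 2 * (ln L / (s / 2) - 0)) with (ln L) by (field; lra).
    apply exp_ln. lra. }
  assert (HV0 : V (htraj s t0 0)).
  { apply HV. unfold htraj. rewrite HE0.
    destruct (hbounds s L dl Hs Hdl HL1 HL2) as [K1 [K2 K3]].
    split; [split|].
    - change (Rabs (hX1 s L - 0) < dl). rewrite Rminus_0_r. exact K1.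
    - change (Rabs (hX2 s L - 0) < dl). rewrite Rminus_0_r. exact K2.
    - change (Rabs (hX3 s L - m) < dl).
      replace (hX3 s L - m) with (hX3 s L + s^2/2) by (simpl; nra). exact K3. }
  assert (Ht0 : 0 <= t0).
  { unfold t0. apply Rdiv_le_0_compat; [|lra]. rewrite <- ln_1. apply ln_le; lra. }
  pose proof (Htr (htraj s t0) (htraj_ok s t0) HV0 t0 Ht0) as Hc.
  unfold htraj, c1, hX1 in Hc; simpl in Hc.
  rewrite Rminus_diag, Rmult_0_r, exp_0 in Hc.
  replace (2 * s * 1 / (1 * (1 * 1) + 1)) with s in Hc by field.
  rewrite Rabs_right in Hc by lra. lra.
Qed.

Theorem corollary4p5 :
  (LH_nonlinear_stable ((0, 0), 0) /\
   (forall m : R, m <> 0 -> LH_nonlinear_stable ((m, 0), 0))) /\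
  ((forall m : R, 0 < m -> LH_nonlinear_stable ((0, 0), m)) /\
   (forall m : R, m < 0 -> LH_unstable ((0, 0), m))).
Proof.
  split; split.
  - exact stab_e0.
  - exact stab_e1.
  - exact stab_e3.
  - exact unstab_e3.
Qed.
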